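(* Let $\mathbb{C}$ be a regular category. If the Pairwise Chinese Remainder Theorem holds in $\mathbb{C}$, then $\mathbb{C}$ has finite 2-fold subobject decompositions.
   Context: A category is regular if it has finite limits and coequalizers of kernel pairs and regular epimorphisms are pullback-stable; the image of a subobject under a morphism is given by regular epi–mono factorization. For $w:S\to W$ and subobject $A$ of $W$, $w\in_S A$ means $w$ factors through a representative of $A$. For an equivalence relation $\theta$ on $X$ and $a,b:S\to X$, $a\equiv b\bmod\theta$ means $(a,b)\in_S\theta$. An equivalence relation is effective if it is the kernel pair of some morphism. Given $a_1,\dots,a_m:S\to X$ and equivalence relations $\theta_1,\dots,\theta_m$ on $X$, the system $x\equiv a_i\bmod\theta_i$ ($i=1,\dots,m$) is approximately solvable if there are a regular epimorphism $\alpha:Q\to S$ and a morphism $a:Q\to X$ with $a\equiv a_i\alpha\bmod\theta_i$ for all $i$; it is approximately pairwise solvable if for all $i,j$ the two-equation subsystem for $i,j$ is approximately solvable. The Pairwise Chinese Remainder Theorem holds in $\mathbb{C}$ if for every object $X$, every $m$, all $a_1,\dots,a_m:S\to X$ and all effective equivalence relations $\theta_1,\dots,\theta_m$ on $X$, approximate pairwise solvability implies approximate solvability. $\mathbb{C}$ has finite 2-fold subobject decompositions if for every positive integer $n$, all objects $A_1,\dots,A_n$ and all subobjects $S,T$ of $A_1\times\cdots\times A_n$: if for all $i,j\in\{1,\dots,n\}$ the images of $S$ and $T$ under $(\pi_i,\pi_j):A_1\times\cdots\times A_n\to A_i\times A_j$ coincide, then $S=T$. *)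

(* Defs.v *)
From mathcomp Require Import ssreflect ssrfun ssrbool eqtype ssrnat fintype.

Set Implicit Arguments.
Unset Strict Implicit.
Unset Printing Implicit Defensive.

Record Cat := {
  Obj :> Type;
  Hom : Obj -> Obj -> Type;
  idm : forall A, Hom A A;
  comp : forall A B D, Hom B D -> Hom A B -> Hom A D;
  comp_id_l : forall A B (f : Hom A B), comp (idm B) f = f;
  comp_id_r : forall A B (f : Hom A B), comp f (idm A) = f;
  comp_assoc : forall A B D E (f : Hom D E) (g : Hom B D) (h : Hom A B),
      comp f (comp g h) = comp (comp f g) h
}.

Arguments Hom {c} _ _.
Arguments idm {c} _.
Arguments comp {c A B D} _ _.
Notation "g \oc f" := (comp g f) (at level 40, left associativity).

Section CatDefs.
Variable C : Cat.

Definition mono {A B : C} (f : Hom A B) : Prop :=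
  forall Z (g h : Hom Z A), f \oc g = f \oc h -> g = h.

Definition is_terminal (T : C) : Prop :=
  forall A : C, exists f : Hom A T, forall g : Hom A T, g = f.

Definition is_binprod (A B P : C) (p1 : Hom P A) (p2 : Hom P B) : Prop :=
  forall Z (f : Hom Z A) (g : Hom Z B), exists h : Hom Z P,
    p1 \oc h = f /\ p2 \oc h = g /\
    forall h' : Hom Z P, p1 \oc h' = f -> p2 \oc h' = g -> h' = h.

Definition is_prod (n : nat) (A : 'I_n -> C) (P : C)
    (pi : forall i, Hom P (A i)) : Prop :=
  forall Z (f : forall i, Hom Z (A i)), exists h : Hom Z P,
    (forall i, pi i \oc h = f i) /\
    forall h' : Hom Z P, (forall i, pi i \oc h' = f i) -> h' = h.

Definition is_equalizer (A B E : C) (f g : Hom A B) (e : Hom E A) : Prop :=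
  f \oc e = g \oc e /\
  forall Z (k : Hom Z A), f \oc k = g \oc k ->
    exists u : Hom Z E, e \oc u = k /\
      forall u' : Hom Z E, e \oc u' = k -> u' = u.

Definition is_coequalizer (A B Q : C) (f g : Hom A B) (q : Hom B Q) : Prop :=
  q \oc f = q \oc g /\
  forall Z (k : Hom B Z), k \oc f = k \oc g ->
    exists u : Hom Q Z, u \oc q = k /\
      forall u' : Hom Q Z, u' \oc q = k -> u' = u.

Definition is_pullback (A B D P : C) (f : Hom A D) (g : Hom B D)
    (p1 : Hom P A) (p2 : Hom P B) : Prop :=
  f \oc p1 = g \oc p2 /\
  forall Z (x : Hom Z A) (y : Hom Z B), f \oc x = g \oc y ->
    exists u : Hom Z P, p1 \oc u = x /\ p2 \oc u = y /\
      forall u' : Hom Z P, p1 \oc u' = x -> p2 \oc u' = y -> u' = u.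

Definition regular_epi (A B : C) (e : Hom A B) : Prop :=
  exists (R : C) (f g : Hom R A), is_coequalizer f g e.

Definition has_finite_limits : Prop :=
  (exists T : C, is_terminal T) /\
  (forall A B : C, exists P (p1 : Hom P A) (p2 : Hom P B), is_binprod p1 p2) /\
  (forall (A B : C) (f g : Hom A B), exists E (e : Hom E A), is_equalizer f g e).

Definition regular_category : Prop :=
  has_finite_limits /\
  (forall (A B P : C) (f : Hom A B) (p1 p2 : Hom P A),
      is_pullback f f p1 p2 -> exists Q (q : Hom A Q), is_coequalizer p1 p2 q) /\
  (forall (A B D P : C) (e : Hom A B) (g : Hom D B) (p1 : Hom P A) (p2 : Hom P D),
      regular_epi e -> is_pullback e g p1 p2 -> regular_epi p2).

Record subobj (X : C) := Subobj {
  sub_dom : C;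
  sub_mor : Hom sub_dom X;
  sub_mono : mono sub_mor
}.

Definition sub_le (X : C) (S T : subobj X) : Prop :=
  exists u : Hom (sub_dom S) (sub_dom T), sub_mor T \oc u = sub_mor S.

Definition sub_eq (X : C) (S T : subobj X) : Prop := sub_le S T /\ sub_le T S.

Definition is_image (X Y : C) (f : Hom X Y) (S : subobj X) (I : subobj Y) : Prop :=
  exists e : Hom (sub_dom S) (sub_dom I),
    regular_epi e /\ sub_mor I \oc e = f \oc sub_mor S.

(** * Relations on X as (jointly monic) spans, i.e. subobjects of X x X *)
Record relation (X : C) := Relation {
  rel_dom : C;
  rel1 : Hom rel_dom X;
  rel2 : Hom rel_dom X;
  rel_jmono : forall Z (g h : Hom Z rel_dom),
      rel1 \oc g = rel1 \oc h -> rel2 \oc g = rel2 \oc h -> g = h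
}.

(** [a == b mod theta] for generalized elements [a b : S -> X],
    i.e. [(a,b) \in_S theta] *)
Definition congr_mod (X S : C) (theta : relation X) (a b : Hom S X) : Prop :=
  exists u : Hom S (rel_dom theta), rel1 theta \oc u = a /\ rel2 theta \oc u = b.

Definition equivalence_relation (X : C) (theta : relation X) : Prop :=
  (forall S (a : Hom S X), congr_mod theta a a) /\
  (forall S (a b : Hom S X), congr_mod theta a b -> congr_mod theta b a) /\
  (forall S (a b c : Hom S X),
      congr_mod theta a b -> congr_mod theta b c -> congr_mod theta a c).

Definition effective_eqrel (X : C) (theta : relation X) : Prop :=
  equivalence_relation theta /\
  exists (Y : C) (f : Hom X Y), is_pullback f f (rel1 theta) (rel2 theta).

Definition approx_solvable_on (X S : C) (m : nat) (K : 'I_m -> Prop)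
    (a : 'I_m -> Hom S X) (theta : 'I_m -> relation X) : Prop :=
  exists (Q : C) (alpha : Hom Q S) (x : Hom Q X),
    regular_epi alpha /\ forall k, K k -> congr_mod (theta k) x (a k \oc alpha).

Definition approx_solvable (X S : C) (m : nat)
    (a : 'I_m -> Hom S X) (theta : 'I_m -> relation X) : Prop :=
  approx_solvable_on (fun _ => True) a theta.

Definition approx_pairwise_solvable (X S : C) (m : nat)
    (a : 'I_m -> Hom S X) (theta : 'I_m -> relation X) : Prop :=
  forall i j : 'I_m, approx_solvable_on (fun k => k = i \/ k = j) a theta.

Definition pairwise_CRT : Prop :=
  forall (X S : C) (m : nat), 0 < m ->
  forall (a : 'I_m -> Hom S X) (theta : 'I_m -> relation X),
    (forall k, effective_eqrel (theta k)) ->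
    approx_pairwise_solvable a theta -> approx_solvable a theta.

Definition finite_2fold_subobject_decompositions : Prop :=
  forall (n : nat), 0 < n ->
  forall (A : 'I_n -> C) (P : C) (pi : forall i, Hom P (A i)),
    @is_prod n A P pi ->
  forall S T : subobj P,
    (forall (i j : 'I_n) (Q : C) (q1 : Hom Q (A i)) (q2 : Hom Q (A j)),
        is_binprod q1 q2 ->
        forall h : Hom P Q, q1 \oc h = pi i -> q2 \oc h = pi j ->
        exists IS IT : subobj Q, is_image h S IS /\ is_image h T IT /\ sub_eq IS IT) ->
    sub_eq S T.

End CatDefs.

(* Main.v *)
Require Import Defs.
From mathcomp Require Import ssreflect ssrfun ssrbool eqtype ssrnat fintype.
From Stdlib Require Import ClassicalEpsilon.

Set Implicit Arguments.
Unset Strict Implicit.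

Ltac ra := repeat rewrite -comp_assoc.

Lemma regepi_epi (C : Cat) (A B : C) (e : Hom A B) :
  regular_epi e -> forall Z (u v : Hom B Z), u \oc e = v \oc e -> u = v.
Proof.
move=> [R [f [g [Hc Hu]]]] Z u v Huv.
have Hk : (u \oc e) \oc f = (u \oc e) \oc g by ra; rewrite Hc.
have [w [_ Hw]] := Hu Z _ Hk.
by rewrite (Hw u erefl) (Hw v (esym Huv)).
Qed.

Definition cov (C : Cat) (W S : C) (p : Hom W S) : Prop :=
  forall (M Y : C) (m : Hom M Y), mono m ->
  forall (y : Hom S Y) (x : Hom W M), m \oc x = y \oc p ->
  exists v : Hom S M, m \oc v = y.

Lemma regepi_cov (C : Cat) (W S : C) (p : Hom W S) : regular_epi p -> cov p.
Proof.
move=> Hp; have Hep := regepi_epi Hp.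
move: Hp => [R [f [g [Hc Hu]]]] M Y m Hm y x Hx.
have Hk : x \oc f = x \oc g.
  apply: Hm. rewrite !comp_assoc Hx. ra. by rewrite Hc.
have [w [Hw _]] := Hu M x Hk.
exists w. apply: Hep. by rewrite -comp_assoc Hw.
Qed.

Lemma cov_comp (C : Cat) (V W S : C) (p : Hom W S) (q : Hom V W) :
  cov p -> cov q -> cov (p \oc q).
Proof.
move=> Hp Hq M Y m Hm y x Hx.
have Hx' : m \oc x = (y \oc p) \oc q by rewrite Hx comp_assoc.
have [v1 Hv1] := Hq M Y m Hm (y \oc p) x Hx'.
exact: (Hp M Y m Hm y v1 Hv1).
Qed.

Lemma cov_id (C : Cat) (S : C) : cov (idm S).
Proof. move=> M Y m Hm y x Hx. exists x. by rewrite Hx comp_id_r. Qed.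

Lemma pb_exists (C : Cat) : has_finite_limits C ->
  forall (A B D : C) (f : Hom A D) (g : Hom B D),
  exists P (p1 : Hom P A) (p2 : Hom P B), is_pullback f g p1 p2.
Proof.
move=> [_ [Hprod Heq]] A B D f g.
have [P0 [q1 [q2 Hb]]] := Hprod A B.
have [E [e [He1 He2]]] := Heq _ _ (f \oc q1) (g \oc q2).
exists E, (q1 \oc e), (q2 \oc e); split; first by rewrite !comp_assoc.
move=> Z x y Hxy.
have [h [H1 [H2 Hh]]] := Hb Z x y.
have Hk : (f \oc q1) \oc h = (g \oc q2) \oc h by ra; rewrite H1 H2.
have [u [Hu Huu]] := He2 Z h Hk.
exists u; split; first by rewrite -comp_assoc Hu.
split; first by rewrite -comp_assoc Hu.
move=> u' H1' H2'. apply: Huu. apply: Hh; by rewrite comp_assoc.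
Qed.

Lemma kp_exists (C : Cat) : has_finite_limits C ->
  forall (X Y : C) (f : Hom X Y), exists th : relation X,
    is_pullback f f (rel1 th) (rel2 th).
Proof.
move=> Hl X Y f.
have [K [r1 [r2 Hpb]]] := pb_exists Hl f f.
have jm : forall Z (g h : Hom Z K),
    r1 \oc g = r1 \oc h -> r2 \oc g = r2 \oc h -> g = h.
  move=> Z g h E1 E2.
  move: (Hpb) => [Hc Hu].
  have Hk : f \oc (r1 \oc g) = f \oc (r2 \oc g) by rewrite !comp_assoc Hc.
  have [u [_ [_ Hu']]] := Hu Z _ _ Hk.
  by rewrite (Hu' g erefl erefl) (Hu' h (esym E1) (esym E2)).
by exists (Relation jm).
Qed.

Lemma kp_congr (C : Cat) (X Y : C) (f : Hom X Y) (th : relation X) :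
  is_pullback f f (rel1 th) (rel2 th) ->
  forall S (a b : Hom S X), congr_mod th a b <-> f \oc a = f \oc b.
Proof.
move=> [Hc Hu] S a b; split.
  by move=> [u [<- <-]]; rewrite !comp_assoc Hc.
move=> Hab. have [u [H1 [H2 _]]] := Hu S a b Hab. by exists u.
Qed.

Lemma kp_effective (C : Cat) (X Y : C) (f : Hom X Y) (th : relation X) :
  is_pullback f f (rel1 th) (rel2 th) -> effective_eqrel th.
Proof.
move=> Hpb; split; last by exists Y, f.
have H := kp_congr Hpb.
split; first by move=> S a; apply/H.
split; first by move=> S a b /H E; apply/H.
by move=> S a b c /H E1 /H E2; apply/H; rewrite E1.
Qed.

Lemma image_cover (C : Cat) : regular_category C ->
  forall (P Q : C) (h : Hom P Q) (S T : subobj P) (IS IT : subobj Q),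
  is_image h S IS -> is_image h T IT -> sub_le IS IT ->
  exists V (s : Hom V (sub_dom S)) (t : Hom V (sub_dom T)),
    regular_epi s /\ (h \oc sub_mor T) \oc t = (h \oc sub_mor S) \oc s.
Proof.
move=> [Hl [_ Hst]] P Q h S T IS IT [eS [HeS ES]] [eT [HeT ET]] [w Hw].
have [V [p1 [p2 Hpb]]] := pb_exists Hl eT (w \oc eS).
exists V, p2, p1; split; first exact: Hst Hpb.
case: Hpb => Hc _.
rewrite -ET -ES -Hw. ra. by rewrite Hc -comp_assoc.
Qed.

Lemma wide (C : Cat) : regular_category C ->
  forall (S X : C) (n : nat)
  (R : forall W : C, 'I_n -> Hom W X -> Hom W S -> Prop),
  (forall W W' (h : Hom W' W) k t p, R W k t p -> R W' k (t \oc h) (p \oc h)) ->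
  (forall k, exists Y (f : Hom Y S) (g : Hom Y X), regular_epi f /\ R Y k g f) ->
  0 < n ->
  forall b, b <= n -> exists W (p : Hom W S) (t : 'I_n -> Hom W X),
    cov p /\ forall k : 'I_n, k < b -> R W k (t k) p.
Proof.
move=> [Hl [_ Hst]] S X n R Rst Hk n0; elim=> [|b IH] Hb.
  have [Y [f [g [Hf _]]]] := Hk (Ordinal n0).
  exists Y, f, (fun _ => g); split; first exact: regepi_cov.
  by [].
have [W [p [t [Hp Ht]]]] := IH (ltnW Hb).
have [Y [f [g [Hf HR]]]] := Hk (Ordinal Hb).
have [V [p1 [p2 Hpb]]] := pb_exists Hl f p.
have Hp2 : regular_epi p2 by exact: Hst Hpb.
case: Hpb => Hc _.
exists V, (p \oc p2), (fun j => if nat_of_ord j == b then g \oc p1 else t j \oc p2).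
split; first by apply: cov_comp => //; exact: regepi_cov.
move=> k; rewrite ltnS leq_eqVlt; case: eqP => [Ekb _|_ /= Hkb].
  have -> : k = Ordinal Hb by apply: val_inj.
  rewrite -Hc. exact: Rst.
exact: Rst (Ht k Hkb).
Qed.

Lemma one_dir (C : Cat) : regular_category C -> pairwise_CRT C ->
  forall (n : nat), 0 < n ->
  forall (A : 'I_n -> C) (P : C) (pi : forall i, Hom P (A i)),
    @is_prod C n A P pi ->
  forall S T : subobj P,
    (forall (i j : 'I_n) (Q : C) (q1 : Hom Q (A i)) (q2 : Hom Q (A j)),
        is_binprod q1 q2 ->
        forall h : Hom P Q, q1 \oc h = pi i -> q2 \oc h = pi j ->
        exists IS IT : subobj Q, is_image h S IS /\ is_image h T IT /\ sub_le IS IT) ->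
    sub_le S T.
Proof.
move=> Hreg Hcrt n n0 A P pi Hprod S T H.
have Hreg' := Hreg.
move: Hreg' => [Hl [_ Hst]].
have Hbin : forall i j : 'I_n, exists (Q : C) (q1 : Hom Q (A i)) (q2 : Hom Q (A j)) (h : Hom P Q),
    is_binprod q1 q2 /\ q1 \oc h = pi i /\ q2 \oc h = pi j.
  move=> i j. case: Hl => _ [Hp _].
  have [Q [q1 [q2 Hb]]] := Hp (A i) (A j).
  have [h [H1 [H2 _]]] := Hb P (pi i) (pi j).
  by exists Q, q1, q2, h.
have Hcov : forall i j : 'I_n, exists V (s : Hom V (sub_dom S)) (tt : Hom V (sub_dom T)),
    regular_epi s /\ forall k, k = i \/ k = j ->
      (pi k \oc sub_mor T) \oc tt = (pi k \oc sub_mor S) \oc s.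
  move=> i j.
  have [Q [q1 [q2 [h [Hb [H1 H2]]]]]] := Hbin i j.
  have [IS [IT [HS [HT Hle]]]] := H i j Q q1 q2 Hb h H1 H2.
  have [V [s [tt [Hs E]]]] := image_cover Hreg HS HT Hle.
  exists V, s, tt; split => // k [->|->].
    by rewrite -H1; ra; rewrite !(comp_assoc h) E.
  by rewrite -H2; ra; rewrite !(comp_assoc h) E.
set R := fun (W : C) (k : 'I_n) (t : Hom W (sub_dom T)) (p : Hom W (sub_dom S)) =>
  (pi k \oc sub_mor T) \oc t = (pi k \oc sub_mor S) \oc p.
have Rst : forall W W' (h : Hom W' W) k t p, R W k t p -> R W' k (t \oc h) (p \oc h).
  by move=> W W' h k t p; rewrite /R => E; rewrite !comp_assoc E.
have Hk : forall k, exists Y (f : Hom Y (sub_dom S)) (g : Hom Y (sub_dom T)),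
    regular_epi f /\ R Y k g f.
  move=> k. have [V [s [tt [Hs E]]]] := Hcov k k.
  exists V, s, tt; split => //; exact: E (or_introl erefl).
have [W [p [t [Hp Ht]]]] := wide Hreg Rst Hk n0 (leqnn n).
set f := fun k : 'I_n => pi k \oc sub_mor T.
set theta := fun k : 'I_n => proj1_sig (constructive_indefinite_description _ (kp_exists Hl (f k))).
have Htheta : forall k, is_pullback (f k) (f k) (rel1 (theta k)) (rel2 (theta k)).
  move=> k; exact: proj2_sig (constructive_indefinite_description _ (kp_exists Hl (f k))).
have Heff : forall k, effective_eqrel (theta k) by move=> k; exact: kp_effective (Htheta k).
have Hpw : approx_pairwise_solvable t theta.
  move=> i j.
  have [V [s [tt [Hs E]]]] := Hcov i j.
  have [Z [z1 [z2 Hpb]]] := pb_exists Hl s p.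
  have Hz2 : regular_epi z2 by exact: Hst Hpb.
  case: Hpb => Hc _.
  exists Z, z2, (tt \oc z1); split => // k Hkk.
  apply/(kp_congr (Htheta k)).
  rewrite /f !comp_assoc E // Ht //.
  by ra; rewrite Hc.
have [Q' [alpha [x [Ha Hx]]]] := Hcrt _ _ n n0 t theta Heff Hpw.
have Ex : sub_mor T \oc x = sub_mor S \oc (p \oc alpha).
  have [h0 [_ Hu]] := Hprod Q' (fun i => pi i \oc (sub_mor S \oc (p \oc alpha))).
  rewrite (Hu (sub_mor T \oc x)); last first.
    move=> i. have := (proj1 (kp_congr (Htheta i) _ _) (Hx i I)).
    rewrite /f !comp_assoc => ->. by rewrite -(Ht i (ltn_ord i)); ra.
  by rewrite (Hu (sub_mor S \oc (p \oc alpha))).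
have Hc2 : cov (p \oc alpha) by apply: cov_comp => //; exact: regepi_cov.
have [v Hv] := Hc2 _ _ (sub_mor T) (@sub_mono _ _ T) (sub_mor S) x Ex.
by exists v.
Qed.

Theorem lemma5p5 (C : Cat) :
  regular_category C -> pairwise_CRT C -> finite_2fold_subobject_decompositions C.
Proof.
move=> Hreg Hcrt n n0 A P pi Hprod S T H; split.
  apply: (one_dir Hreg Hcrt n0 Hprod) => i j Q q1 q2 Hb h H1 H2.
  have [IS [IT [HS [HT [E1 E2]]]]] := H i j Q q1 q2 Hb h H1 H2.
  by exists IS, IT.
apply: (one_dir Hreg Hcrt n0 Hprod) => i j Q q1 q2 Hb h H1 H2.
have [IS [IT [HS [HT [E1 E2]]]]] := H i j Q q1 q2 Hb h H1 H2.
by exists IT, IS.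
Qed.
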